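(* Let $X$ be a real topological vector space, $C\subseteq X$ convex and $x_0\in C$. Then $x_0\notin\operatorname{fri} C$ if and only if there exist $y\in C$ and a neighbourhood $V_y$ of $y$ such that for every $z\in V_y\cap C$ and every $\epsilon>0$ we have $x_0+\epsilon(x_0-z)\notin C$.
   Context: For a convex set $C$, a convex subset $F\subseteq C$ is a face of $C$ if for every $x\in F$ and all $y,z\in C$ with $x\in(y,z)=\{(1-t)y+tz:t\in(0,1)\}$ we have $y,z\in F$; $F_{\min}(x,C)$ is the intersection of all faces of $C$ containing $x\in C$. The face relative interior is $\operatorname{fri} C=\{x\in C: C\subseteq\overline{F_{\min}(x,C)}\}$. *)

(* Defs.v *)
From HB Require Import structures.
From mathcomp Require Import all_boot all_order all_algebra.
From mathcomp Require Import all_classical all_reals all_analysis.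
Set Implicit Arguments. Unset Strict Implicit. Unset Printing Implicit Defensive.
Import Order.TTheory GRing.Theory Num.Theory.
Local Open Scope classical_set_scope.
Local Open Scope ring_scope.

Section Faces.
Variables (R : realType) (X : lmodType R).

Definition convex (C : set X) : Prop :=
  forall x y t, C x -> C y -> 0 <= t -> t <= 1 -> C ((1 - t) *: x + t *: y).

Definition open_segment (y z : X) : set X :=
  [set x | exists t : R, 0 < t /\ t < 1 /\ x = (1 - t) *: y + t *: z].

Definition is_face (C F : set X) : Prop :=
  [/\ F `<=` C, convex F &
      forall x y z, F x -> C y -> C z -> open_segment y z x -> F y /\ F z].

Definition Fmin (x : X) (C : set X) : set X :=
  \bigcap_(F in [set F | is_face C F /\ F x]) F.
End Faces.

Definition fri (R : realType) (X : topologicalLmodType R) (C : set X) : set X :=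
  [set x | C x /\ C `<=` closure (Fmin x C)].

(* Main.v *)
Require Import Defs.
From HB Require Import structures.
From mathcomp Require Import all_boot all_order all_algebra.
From mathcomp Require Import all_classical all_reals all_analysis.
From mathcomp Require Import ring lra.
Import Order.TTheory GRing.Theory Num.Theory.
Local Open Scope classical_set_scope.
Local Open Scope ring_scope.

Section Gen.
Variables (R : realType) (X : lmodType R) (f : R -> R -> R -> X).
Hypothesis fD : forall a b c a' b' c', f a b c + f a' b' c' = f (a+a') (b+b') (c+c').
Hypothesis fZ : forall r a b c, r *: f a b c = f (r*a) (r*b) (r*c).
Hypothesis fN : forall a b c, - f a b c = f (-a) (-b) (-c).
Local Notation u := (f 1 0 0).
Local Notation v := (f 0 1 0).
Local Notation w := (f 0 0 1).

Lemma I1 eps e1 : e1 != 0 ->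
  u + eps*:(u - w) = (1 - eps/e1)*:u + (eps/e1)*:(u + e1*:(u - w)).
Proof. move=> h; rewrite !(fN, fZ, fD); congr f; field; done. Qed.

Lemma I2 eps t :
  u + eps*:(u - ((1-t)*:v + t*:w)) = (1-t)*:(u + eps*:(u-v)) + t*:(u+eps*:(u-w)).
Proof. rewrite !(fN, fZ, fD); congr f; ring. Qed.

Lemma I3 e t : 1 + e * t != 0 ->
  u + (e*(1-t)/(1+e*t))*:(u - v) =
  (1-(e*t/(1+e*t)))*:(u + e*:(u - ((1-t)*:v+t*:w))) + (e*t/(1+e*t))*:w.
Proof. move=> h; rewrite !(fN, fZ, fD); congr f; field; done. Qed.

Lemma I4 e : 1 + e != 0 ->
  u = (1 - e/(1+e))*:(u + e*:(u - w)) + (e/(1+e))*:w.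
Proof. move=> h; rewrite !(fN, fZ, fD); congr f; field; done. Qed.
End Gen.
Arguments I1 {R X f}.
Arguments I2 {R X f}.
Arguments I3 {R X f}.
Arguments I4 {R X f}.

Section Main.
Variables (R : realType) (X : lmodType R).
Definition L3 (u v w : X) (a b c : R) := a*:u + b*:v + c*:w.
Lemma L3D u v w a b c a' b' c' :
  L3 u v w a b c + L3 u v w a' b' c' = L3 u v w (a+a') (b+b') (c+c').
Proof. by rewrite /L3 !scalerDl addrACA [X in X + _]addrACA. Qed.
Lemma L3Z u v w r a b c : r *: L3 u v w a b c = L3 u v w (r*a) (r*b) (r*c).
Proof. by rewrite /L3 !scalerDr !scalerA. Qed.
Lemma L3N u v w a b c : - L3 u v w a b c = L3 u v w (-a) (-b) (-c).
Proof. by rewrite /L3 !opprD !scaleNr. Qed.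
Lemma L3u u v w : L3 u v w 1 0 0 = u.
Proof. by rewrite /L3 !scale0r scale1r !addr0. Qed.
Lemma L3v u v w : L3 u v w 0 1 0 = v.
Proof. by rewrite /L3 !scale0r scale1r add0r addr0. Qed.
Lemma L3w u v w : L3 u v w 0 0 1 = w.
Proof. by rewrite /L3 !scale0r scale1r !add0r. Qed.

Variables (C : set X) (x0 : X).
Hypothesis cC : convex C.
Hypothesis Cx0 : C x0.

Definition G := [set z | C z /\ exists eps : R, 0 < eps /\ C (x0 + eps *: (x0 - z))].

Lemma shrink z e1 eps : C (x0 + e1*:(x0 - z)) -> 0 < eps -> eps <= e1 ->
  C (x0 + eps*:(x0 - z)).
Proof.
move=> h ep le.
have e10 : e1 != 0 by rewrite gt_eqF // (lt_le_trans ep le).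
have := I1 (@L3D x0 z z) (@L3Z x0 z z) (@L3N x0 z z) eps e1 e10.
rewrite L3u L3w => ->; apply: cC => //.
  by rewrite divr_ge0 // ltW // (lt_le_trans ep le).
by rewrite ler_pdivrMr ?mul1r // (lt_le_trans ep le).
Qed.

Lemma G_face_side x y z t : G x -> C y -> C z -> 0 < t -> t < 1 ->
  x = (1 - t) *: y + t *: z -> G y.
Proof.
move=> [Cx [e [e0 Ce]]] Cy Cz t0 t1 xE; rewrite xE in Ce.
split=> //.
have h : 1 + e * t != 0 by rewrite gt_eqF // addr_gt0 // mulr_gt0.
have hp : 0 < 1 + e * t by rewrite addr_gt0 // mulr_gt0.
exists (e*(1-t)/(1+e*t)); split.
  by rewrite divr_gt0 // mulr_gt0 // subr_gt0.
have := I3 (@L3D x0 y z) (@L3Z x0 y z) (@L3N x0 y z) e t h.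
rewrite L3u L3v L3w => ->; apply: cC => //.
  by rewrite divr_ge0 // ltW // mulr_gt0.
by rewrite ler_pdivrMr // mul1r lerDr.
Qed.

Lemma G_face : is_face C G.
Proof.
split.
- by move=> z [].
- move=> a b t [Ca [e1 [e10 C1]]] [Cb [e2 [e20 C2]]] t0 t1.
  split; first exact: cC.
  have [le|lt] := leP e1 e2.
  + exists e1; split=> //.
    have := I2 (@L3D x0 a b) (@L3Z x0 a b) (@L3N x0 a b) e1 t.
    rewrite L3u L3v L3w => ->; apply: cC => //.
    exact: (@shrink _ _ _ C2 e10 le).
  + exists e2; split=> //.
    have := I2 (@L3D x0 a b) (@L3Z x0 a b) (@L3N x0 a b) e2 t.
    rewrite L3u L3v L3w => ->; apply: cC => //.
    exact: (@shrink _ _ _ C1 e20 (ltW lt)).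
- move=> x y z Gx Cy Cz [t [t0 [t1 xE]]]; split.
    exact: (@G_face_side _ _ _ _ Gx Cy Cz t0 t1 xE).
  apply: (@G_face_side x z y (1 - t) Gx Cz Cy).
  + by rewrite subr_gt0.
  + by rewrite ltrBlDr ltrDl.
  + by rewrite xE opprB addrCA subrr addr0 addrC.
Qed.

Lemma Gx0 : G x0.
Proof.
split=> //; exists 1; split=> //.
by rewrite subrr scaler0 addr0.
Qed.

Lemma Fmin_char z : Fmin x0 C z <-> G z.
Proof.
split.
  by move=> h; apply: h; split; [exact: G_face | exact: Gx0].
move=> [Cz [e [e0 Ce]]] F [[FC cF fF] Fx0].
have h : 1 + e != 0 by rewrite gt_eqF // addr_gt0.
have hp : 0 < 1 + e by rewrite addr_gt0.
have := fF x0 _ z Fx0 Ce Cz.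
case; last by [].
exists (e/(1+e)); split; first by rewrite divr_gt0.
split; first by rewrite ltr_pdivrMr // mul1r ltrDr.
have := I4 (@L3D x0 z z) (@L3Z x0 z z) (@L3N x0 z z) e h.
by rewrite L3u L3w.
Qed.
End Main.

Theorem theorem4p7 (R : realType) (X : topologicalLmodType R) (C : set X)
    (x0 : X) :
  convex C -> C x0 ->
  (~ fri C x0 <->
   exists y : X, C y /\
     exists V : set X, nbhs y V /\
       forall z : X, V z -> C z ->
         forall eps : R, 0 < eps -> ~ C (x0 + eps *: (x0 - z))).
Proof.
move=> cC Cx0; split.
- move=> nf.
  have : ~ (C `<=` closure (Fmin x0 C)) by move=> h; apply: nf.
  move/existsNP=> [y /not_implyP [Cy ncl]].
  exists y; split=> //.
  move: ncl; rewrite /closure /= => /existsNP [V /not_implyP [nV nI]].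
  exists V; split=> // z Vz Cz eps e0 Ce; apply: nI.
  exists z; split=> //.
  by apply/(@Fmin_char _ _ _ _ cC Cx0 z); split=> //; exists eps.
- move=> [y [Cy [V [nV H]]]] [_ sub].
  have [z [Fz Vz]] := sub y Cy V nV.
  have [Cz [e [e0 Ce]]] := (@Fmin_char _ _ _ _ cC Cx0 z).1 Fz.
  exact: (H z Vz Cz e e0 Ce).
Qed.
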